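(* Let $\mathcal E=\{p_1,\dots,p_n\}\subseteq\mathbb K[x,y_1,\dots,y_n]$ (regarded as a vector of polynomials), let $\bar\sigma=(\sigma_1,\dots,\sigma_n)\in\Sigma^n$ be a stream solution of $\mathcal E$, and let $\bar r_0=\bar\sigma(0)$. Then $$\big(\nabla^{\eth}_{\bar y}\mathcal E\big)(X,\bar r_0,\bar\sigma)\cdot\bar\sigma'^{T}+\Big(\frac{\eth\mathcal E}{\eth x}(X,\bar\sigma)\Big)^{T}=0 .$$
   Context: Streams $\Sigma=\mathbb K^\omega$ over a field $\mathbb K$ of characteristic $0$ with pointwise sum, convolution product $(\sigma\times\tau)(i)=\sum_{j=0}^{i}\sigma(j)\tau(i-j)$, $X=(0,1,0,\dots)$, scalars as $(r,0,0,\dots)$, stream derivative $\sigma'(i)=\sigma(i+1)$. A stream solution of a finite set $\mathcal E$ of polynomials is $\bar\sigma\in\Sigma^n$ with $p(X,\bar\sigma)=0$ for all $p\in\mathcal E$ (substituting $x\mapsto X$, $y_i\mapsto\sigma_i$). Syntactic stream derivative of $p\in\mathbb K[x,\bar y]$: with new indeterminates $y_{0i},y_i'$, $y_0:=x$, $y_{00}:=0$, order $y_0<\dots<y_n$, $\min(m)$ the least variable of monomial $m\ne1$: $(1)'=0$, $(x)'=1$, $(y_i)'=y_i'$, $(y_im)'=y_i'm+y_{0i}(m)'$ when $m\ne1$, $y_i=\min(y_im)$, extended linearly. Writing uniquely $p'=q_0+\sum_i q_iy_i'$ with $q_j\in\mathbb K[x,\bar y_0,\bar y]$, set $\frac{\eth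 p}{\eth x}:=q_0$ (a polynomial in $x,\bar y$ only) and $\frac{\eth p}{\eth y_i}:=q_i$. $\nabla^{\eth}_{\bar y}\mathcal E$ is the $n\times n$ matrix whose $i$-th row is $(\frac{\eth p_i}{\eth y_1},\dots,\frac{\eth p_i}{\eth y_n})$, and $\frac{\eth\mathcal E}{\eth x}:=(\frac{\eth p_1}{\eth x},\dots,\frac{\eth p_n}{\eth x})$. Evaluation at $(X,\bar r_0,\bar\sigma)$ substitutes $x\mapsto X$, $y_{0i}\mapsto r_{0i}$, $y_i\mapsto\sigma_i$. *)

(* Defs.v *)
From HB Require Import structures.
From mathcomp Require Import all_boot all_algebra.
From mathcomp Require boolp.
From mathcomp.multinomials Require Import mpoly.
From Stdlib Require Import FunctionalExtensionality.

Set Implicit Arguments.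
Unset Strict Implicit.
Unset Printing Implicit Defensive.

Import GRing.Theory.
Local Open Scope ring_scope.

Definition stream (K : Type) := nat -> K.

Section StreamRing.
Variable K : comNzRingType.

HB.instance Definition _ := boolp.gen_eqMixin (stream K).
HB.instance Definition _ := boolp.gen_choiceMixin (stream K).

Definition szero : stream K := fun _ => 0.
Definition sopp (s : stream K) : stream K := fun i => - s i.
Definition sadd (s t : stream K) : stream K := fun i => s i + t i.
Definition smul (s t : stream K) : stream K :=
  fun i => \sum_(j < i.+1) s j * t (i - j)%N.
Definition sconst (r : K) : stream K := fun i => if i == 0%N then r else 0.
Definition sone : stream K := sconst 1.

Lemma saddA : associative sadd.
Proof. by move=> s t u; apply: functional_extensionality => i; rewrite /sadd addrA. Qed.
Lemma saddC : commutative sadd.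
Proof. by move=> s t; apply: functional_extensionality => i; rewrite /sadd addrC. Qed.
Lemma sadd0 : left_id szero sadd.
Proof. by move=> s; apply: functional_extensionality => i; rewrite /sadd add0r. Qed.
Lemma saddN : left_inverse szero sopp sadd.
Proof. by move=> s; apply: functional_extensionality => i; rewrite /sadd /sopp addNr. Qed.

HB.instance Definition _ := GRing.isZmodule.Build (stream K) saddA saddC sadd0 saddN.

Definition strunc (k : nat) (s : stream K) : {poly K} := \poly_(j < k) s j.

Lemma smul_poly s t i : smul s t i = (strunc i.+1 s * strunc i.+1 t)`_i.
Proof.
rewrite coefM /smul /=; apply: (@eq_bigr K 0 +%R) => j _.
have hj : (i - j < i.+1)%N by rewrite ltnS leq_subr.
by rewrite /strunc coef_poly (ltn_ord j) coef_poly hj.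
Qed.

Lemma coefM_loc (p q p' q' : {poly K}) i :
  (forall j, (j <= i)%N -> p`_j = p'`_j) -> (forall j, (j <= i)%N -> q`_j = q'`_j) ->
  (p * q)`_i = (p' * q')`_i.
Proof.
move=> hp hq; rewrite !coefM; apply: (@eq_bigr K 0 +%R) => j _.
rewrite hp; last by rewrite -ltnS.
by rewrite hq // leq_subr.
Qed.

Lemma strunc_mul s t i j : (j <= i)%N ->
  (strunc i.+1 (smul s t))`_j = (strunc i.+1 s * strunc i.+1 t)`_j.
Proof.
move=> hj; rewrite /strunc coef_poly ltnS hj smul_poly.
by apply: coefM_loc => k hk; rewrite /strunc !coef_poly !ltnS hk (leq_trans hk hj).
Qed.

Lemma smulA : associative smul.
Proof.
move=> s t u; apply: functional_extensionality => i.
rewrite [LHS]smul_poly [RHS]smul_poly.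
rewrite (@coefM_loc _ _ (strunc i.+1 s) (strunc i.+1 t * strunc i.+1 u) i);
  [|by []|by move=> j hj; rewrite strunc_mul].
rewrite [RHS](@coefM_loc _ _ (strunc i.+1 s * strunc i.+1 t) (strunc i.+1 u) i);
  [|by move=> j hj; rewrite strunc_mul|by []].
by rewrite mulrA.
Qed.

Lemma smulC : commutative smul.
Proof.
move=> s t; apply: functional_extensionality => i.
by rewrite [LHS]smul_poly [RHS]smul_poly mulrC.
Qed.

Lemma smul1 : left_id sone smul.
Proof.
move=> s; apply: functional_extensionality => i.
rewrite smul_poly; have -> : strunc i.+1 sone = 1.
  apply/polyP => j; rewrite /strunc coef_poly coef1 /sone /sconst.
  by case: j => [|j] //=; case: ifP.
by rewrite mul1r /strunc coef_poly ltnSn.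
Qed.

Lemma smulDl : left_distributive smul sadd.
Proof.
move=> s t u; apply: functional_extensionality => i.
rewrite /smul /sadd /= -big_split /=; apply: (@eq_bigr K 0 +%R) => j _.
by rewrite mulrDl.
Qed.

Lemma sone_neq0 : sone != szero.
Proof.
apply/eqP => /(congr1 (fun f => f 0%N)); rewrite /sone /sconst /szero /=.
by move/eqP; rewrite oner_eq0.
Qed.

HB.instance Definition _ :=
  GRing.Zmodule_isComNzRing.Build (stream K) smulA smulC smul1 smulDl sone_neq0.

Definition sX : stream K := fun i => if i == 1%N then 1 else 0.
Definition sder (s : stream K) : stream K := fun i => s i.+1.

End StreamRing.

(* Polynomials of K[x, y_1..y_n] are {mpoly K[n.+1]}: variable 0 is x,
   variable (lift ord0 i) is y_(i+1).
   Polynomials of K[x, y_01..y_0n, y_1..y_n] are {mpoly K[n.+1 + n]}: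
   variable (lshift n v) is the variable v of K[x, ybar] (x or y_i), and
   variable (rshift n.+1 i) is y_0(i+1).
   The derivative p' = q_0 + sum_i q_i y_i' (p' is linear in the y_i') is
   represented by the row vector (q_0, q_1, ..., q_n) with entries in
   K[x, ybar_0, ybar]; component v : 'I_n.+1 holds the coefficient of y_v'
   (with the convention y_0' = x' = 1 for component 0). *)

Section SynDeriv.
Variables (K : fieldType) (n : nat).

Local Notation N := (n.+1 + n)%N.
Local Notation poly0 := {mpoly K[N]}.

Definition minvar (m : 'X_{1..n.+1}) : option 'I_n.+1 :=
  [pick v : 'I_n.+1 | (0 < m v)%N && [forall w : 'I_n.+1, (w < v)%N ==> (m w == 0%N)]].

Definition liftmono (m : 'X_{1..n.+1}) : poly0 :=
  \prod_(v < n.+1) 'X_(lshift n v) ^+ m v.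

Definition y0var (v : 'I_n.+1) : poly0 :=
  if unlift ord0 v is Some i then 'X_(rshift n.+1 i) else 0.

(* derivative of a monomial, by recursion on its degree:
   (1)' = 0, (x)' = 1, (y_i)' = y_i',
   (y_i m)' = y_i' m + y_0i (m)'   when m <> 1 and y_i = min(y_i m)  *)
Fixpoint dmono (k : nat) (m : 'X_{1..n.+1}) : 'rV[poly0]_n.+1 :=
  if k is k'.+1 then
    if minvar m is Some v then
      let m1 := (m - U_(v))%MM in
      if m1 == 0%MM then delta_mx 0 v
      else liftmono m1 *: delta_mx 0 v + y0var v *: dmono k' m1
    else 0
  else 0.

Definition synder (p : {mpoly K[n.+1]}) : 'rV[poly0]_n.+1 :=
  \sum_(m <- msupp p) (p@_m)%:MP *: dmono (mdeg m) m.

Definition ethx (p : {mpoly K[n.+1]}) : poly0 := synder p 0 ord0.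
Definition ethy (p : {mpoly K[n.+1]}) (i : 'I_n) : poly0 := synder p 0 (lift ord0 i).

Definition nabla_eth (E : 'I_n -> {mpoly K[n.+1]}) : 'M[poly0]_n :=
  \matrix_(i, j) ethy (E i) j.
Definition ethxE (E : 'I_n -> {mpoly K[n.+1]}) : 'rV[poly0]_n :=
  \row_i ethx (E i).

Definition seval (sigma : 'I_n -> stream K) (p : {mpoly K[n.+1]}) : stream K :=
  mmap (@sconst K)
    (fun v : 'I_n.+1 => if unlift ord0 v is Some i then sigma i else sX K) p.

Definition seval0 (r0 : 'I_n -> K) (sigma : 'I_n -> stream K) (q : poly0) : stream K :=
  mmap (@sconst K)
    (fun w : 'I_N => match split w with
                     | inl v => if unlift ord0 v is Some i then sigma i else sX K
                     | inr i => sconst (r0 i)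
                     end) q.

Definition stream_solution (E : 'I_n -> {mpoly K[n.+1]}) (sigma : 'I_n -> stream K) :=
  forall i, seval sigma (E i) = 0.

End SynDeriv.

(* Main.v *)
Require Import Defs.
From HB Require Import structures.
From mathcomp Require Import all_boot all_algebra.
From mathcomp.multinomials Require Import mpoly.
From Stdlib Require Import FunctionalExtensionality.
Local Open Scope ring_scope.
Import GRing.Theory.

Section S.
Variable K : comNzRingType.

Lemma stream_ext (s t : stream K) : (forall i, s i = t i) -> s = t.
Proof. by move=> h; apply: functional_extensionality. Qed.

Lemma saddE (s t : stream K) i : (s + t) i = s i + t i. Proof. by []. Qed.
Lemma soppE (s : stream K) i : (- s) i = - s i. Proof. by []. Qed.
Lemma s0E i : (0 : stream K) i = 0. Proof. by []. Qed.
Lemma smulE (s t : stream K) i : (s * t) i = \sum_(j < i.+1) s j * t (i - j)%N.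
Proof. by []. Qed.
Lemma s1E i : (1 : stream K) i = if i == 0%N then 1 else 0. Proof. by []. Qed.

Lemma sconst_mul_l (c : K) (s : stream K) i : (sconst c * s) i = c * s i.
Proof.
rewrite smulE big_ord_recl /= subn0 big1 ?addr0 // => j _.
by rewrite /sconst /= mul0r.
Qed.

Lemma sconst_zmod : zmod_morphism (@sconst K).
Proof.
move=> a b; apply: stream_ext => i; rewrite saddE soppE /sconst.
by case: (i == 0%N); rewrite ?subrr.
Qed.

HB.instance Definition _ := GRing.isZmodMorphism.Build K (stream K) (@sconst K) sconst_zmod.

Lemma sconst_mon : monoid_morphism (@sconst K).
Proof.
split => // a b; apply: stream_ext => i; rewrite sconst_mul_l /sconst.
by case: (i == 0%N); rewrite ?mulr0.
Qed.

HB.instance Definition _ := GRing.isMonoidMorphism.Build K (stream K) (@sconst K) sconst_mon.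

Lemma sderD (s t : stream K) : sder (s + t) = sder s + sder t.
Proof. by apply: stream_ext. Qed.
Lemma sder0 : sder (0 : stream K) = 0.
Proof. by apply: stream_ext. Qed.
Lemma sder_sum (I : Type) (r : seq I) (F : I -> stream K) :
  sder (\sum_(x <- r) F x) = \sum_(x <- r) sder (F x).
Proof. exact: (big_morph _ sderD sder0). Qed.
Lemma sder_const (c : K) : sder (sconst c) = 0.
Proof. by apply: stream_ext. Qed.
Lemma sder1 : sder (1 : stream K) = 0.
Proof. exact: (sder_const 1). Qed.
Lemma sder_X : sder (sX K) = 1.
Proof. by apply: stream_ext => i; rewrite /sder /sX s1E. Qed.

Lemma sder_mul (s t : stream K) :
  sder (s * t) = sder s * t + sconst (s 0%N) * sder t.
Proof.
apply: stream_ext => i; rewrite saddE sconst_mul_l /sder smulE big_ord_recl.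
rewrite subn0 addrC smulE; congr (_ + _).
Qed.

Lemma sder_cmul (c : K) (s : stream K) : sder (sconst c * s) = sconst c * sder s.
Proof. by rewrite sder_mul sder_const mul0r add0r /sconst eqxx. Qed.

End S.

Section Main.
Variables (K : fieldType) (n : nat).
Variable sigma : 'I_n -> stream K.
Local Notation r0 := (fun i => sigma i 0%N).

Definition ext : 'I_n.+1 -> stream K :=
  fun v : 'I_n.+1 => if unlift ord0 v is Some i then sigma i else sX K.
Definition tau (v : 'I_n.+1) := sder (ext v).

Local Notation ev0 := (seval0 r0 sigma).

Lemma ev0_is_zmod : zmod_morphism ev0.
Proof. by move=> a b; rewrite /seval0 rmorphB. Qed.
HB.instance Definition _ := GRing.isZmodMorphism.Build _ _ ev0 ev0_is_zmod.
Lemma ev0_is_mon : monoid_morphism ev0.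
Proof. by split; [rewrite /seval0 rmorph1 | move=> a b; rewrite /seval0 rmorphM]. Qed.
HB.instance Definition _ := GRing.isMonoidMorphism.Build _ _ ev0 ev0_is_mon.

Lemma ev0_Xl v : ev0 'X_(lshift n v) = ext v.
Proof.
rewrite /seval0 mmapX mmap1U.
by have := unsplitK (inl v : 'I_n.+1 + 'I_n) => /= ->.
Qed.

Lemma ev0_liftmono m : ev0 (liftmono K m) = mmap1 ext m.
Proof.
rewrite /liftmono rmorph_prod /mmap1; apply: eq_bigr => v _.
rewrite rmorphXn /=; congr (_ ^+ _); exact: ev0_Xl.
Qed.

Lemma ev0_y0var v : ev0 (y0var K v) = sconst (ext v 0%N).
Proof.
rewrite /y0var /ext; case: (unlift ord0 v) => [i|].
  rewrite /seval0 mmapX mmap1U.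
  by have := unsplitK (inr i : 'I_n.+1 + 'I_n) => /= ->.
by rewrite rmorph0 /sX /= rmorph0.
Qed.

Lemma minvar_some (m : 'X_{1..n.+1}) : m != 0%MM ->
  exists2 v, minvar m = Some v & (0 < m v)%N.
Proof.
move=> nz; rewrite /minvar; case: pickP => [v /andP[h _]|h]; first by exists v.
exfalso; move/eqP: nz; apply; apply/mnmP => v; rewrite mnm0E.
elim/ltn_ind: (v : nat) {-2}v (erefl (v : nat)) => k IH w wk.
move: (h w); rewrite /=; apply: contraFeq => nzw; rewrite lt0n nzw /=.
apply/forallP => u; apply/implyP => uw; apply/eqP; apply: (IH u) => //.
by rewrite -wk.
Qed.

Lemma sum_delta (v : 'I_n.+1) (c : {mpoly K[(n.+1 + n)%N]}) :
  \sum_(w < n.+1) ev0 (c * (delta_mx 0 v : 'rV_n.+1) 0 w) * tau w = ev0 c * tau v.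
Proof.
rewrite (bigD1 v) //= big1 ?addr0.
  by rewrite mxE !eqxx /= mulr1.
move=> w /negbTE wv; rewrite mxE eqxx /= wv /=.
by rewrite mulr0 rmorph0 mul0r.
Qed.

Lemma dmono_ok k (m : 'X_{1..n.+1}) : mdeg m = k ->
  sder (mmap1 ext m) = \sum_(w < n.+1) ev0 (dmono K k m 0 w) * tau w.
Proof.
elim: k m => [|k IH] m hm /=.
  move/eqP: hm; rewrite mdeg_eq0 => /eqP ->; rewrite mmap11 sder1.
  by rewrite big1 // => w _; rewrite mxE rmorph0 mul0r.
have nz : m != 0%MM by rewrite -mdeg_eq0 hm.
have [v -> hv] := minvar_some m nz.
set m1 := (m - U_(v))%MM.
have em : m = (m1 + U_(v))%MM.
  rewrite submK //; apply/mnm_lepP => u; rewrite mnm1E.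
  by case: eqP => [<-|].
have dm1 : mdeg m1 = k.
  by move: hm; rewrite em mdegD mdeg1 addn1 => [[]].
have mm : mmap1 ext m = ext v * mmap1 ext m1.
  by rewrite em commr_mmap1_M ?mmap1U 1?mulrC // => i x; apply: mulrC.
rewrite mm sder_mul; case: eqP => [e1|ne1].
  rewrite e1 mmap11 sder1 mulr0 addr0 mulr1.
  have := sum_delta v 1; rewrite rmorph1 mul1r => h; rewrite -[sder (ext v)]/(tau v) -h.
  by apply: eq_bigr => w _; rewrite mul1r.
rewrite (eq_bigr (fun w => ev0 (liftmono K m1 * (delta_mx 0 v : 'rV_n.+1) 0 w) * tau w
   + ev0 (y0var K v) * (ev0 (dmono K k m1 0 w) * tau w))); last first.
  by move=> w _; rewrite !mxE rmorphD !rmorphM /= mulrDl mulrA.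
rewrite big_split /= sum_delta -mulr_sumr -IH // ev0_liftmono ev0_y0var.
by rewrite mulrC.
Qed.

Lemma main p : sder (seval sigma p) = \sum_(w < n.+1) ev0 (synder p 0 w) * tau w.
Proof.
rewrite /seval /mmap sder_sum.
rewrite (eq_bigr (fun w => \sum_(m <- msupp p)
   sconst (p@_m) * (ev0 (dmono K (mdeg m) m 0 w) * tau w))); last first.
  move=> w _; rewrite summxE rmorph_sum mulr_suml; apply: eq_bigr => m _.
  rewrite mxE rmorphM /= /seval0 mmapC -/(seval0 _ _ _) mulrA //.
rewrite exchange_big /=; apply: eq_bigr => m _.
by rewrite sder_cmul (@dmono_ok _ m erefl) mulr_sumr.
Qed.

End Main.

Theorem lemma3p6 (K : fieldType) (charK0 : [pchar K] =i pred0) (n : nat)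
  (E : 'I_n -> {mpoly K[n.+1]}) (sigma : 'I_n -> stream K) :
  stream_solution E sigma ->
  let r0 : 'I_n -> K := fun i => sigma i 0%N in
  map_mx (seval0 r0 sigma) (nabla_eth E) *m (\row_j sder (sigma j))^T
    + (map_mx (seval0 r0 sigma) (ethxE E))^T = 0.
Proof.
move=> sol r0; apply/matrixP => i j.
transitivity (sder (seval sigma (E i))); last first.
  by rewrite sol sder0 mxE.
rewrite (@main K n sigma (E i)) big_ord_recl !mxE.
rewrite /tau /ext unlift_none sder_X mulr1.
rewrite addrC; congr (_ + _).
apply: eq_bigr => k _.
by rewrite !mxE /ethy liftK.
Qed.
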